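(* (1) If $e$ is a quasi-identity of a ring, then so is $e^n$ for each $n\in\mathbb N$. (2) A contractive quasi-identity of a normed algebra is an idempotent, and hence its norm is either $0$ or $1$. (3) A contractive quasi-identity of an operator algebra $A\subset B(H)$ is unique if it exists, and it is Hermitian (hence an orthogonal projection).
   Context: A quasi-identity of a ring $R$ is an element $e\in R$ with $r=er+re-ere$ for all $r\in R$. A quasi-identity $e$ of a normed algebra is contractive if $\|e\|\le1$. An operator algebra $A\subset B(H)$ is a norm-closed subalgebra of $B(H)$ for a Hilbert space $H$. *)

(* Defs.v *)
From HB Require Import structures.
From mathcomp Require Import all_boot all_order all_algebra.
From mathcomp Require Import all_classical all_reals.
From mathcomp Require Import topology normedtype.
From mathcomp.real_closed Require Import complex.

Set Implicit Arguments.
Unset Strict Implicit.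
Unset Printing Implicit Defensive.

Import Order.TTheory GRing.Theory Num.Theory.
Local Open Scope ring_scope.

Definition nu_ring (R : zmodType) (mul : R -> R -> R) : Prop :=
  [/\ associative mul, left_distributive mul +%R & right_distributive mul +%R].

Definition quasi_identity (R : zmodType) (mul : R -> R -> R) (e : R) : Prop :=
  forall r : R, r = mul e r + mul r e - mul (mul e r) e.

(* e ^ n for n >= 1 in a (possibly non-unital) ring: e^1 = e, e^(n+1) = e * e^n.
   (For n = 0 the value is a junk value e, never used.) *)
Definition qpow (R : Type) (mul : R -> R -> R) (e : R) (n : nat) : R :=
  iter n.-1 (mul e) e.

Definition normed_algebra (K : numFieldType) (A : normedModType K)
    (mul : A -> A -> A) : Prop :=
  [/\ nu_ring mul,
      (forall (k : K) (a b : A), mul (k *: a) b = k *: mul a b),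
      (forall (k : K) (a b : A), mul a (k *: b) = k *: mul a b) &
      (forall a b : A, `|mul a b| <= `|a| * `|b|)].

Definition hnorm (R : realType) (H : lmodType R[i]) (ip : H -> H -> R[i]) (x : H)
  : R[i] := sqrtC (ip x x).

Definition is_hilbert (R : realType) (H : lmodType R[i]) (ip : H -> H -> R[i])
  : Prop :=
  [/\ (forall (a : R[i]) (x y z : H), ip (a *: x + y) z = a * ip x z + ip y z),
      (forall x y : H, ip y x = Num.conj (ip x y)),
      (forall x : H, 0 <= ip x x),
      (forall x : H, ip x x = 0 -> x = 0) &
      (forall u : nat -> H,
         (forall eps : R[i], 0 < eps -> exists N : nat, forall m n : nat,
            (N <= m)%N -> (N <= n)%N -> hnorm ip (u m - u n) < eps) ->
         exists l : H, forall eps : R[i], 0 < eps -> exists N : nat,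
            forall n : nat, (N <= n)%N -> hnorm ip (u n - l) < eps)].

Definition opnorm_le (R : realType) (H : lmodType R[i]) (ip : H -> H -> R[i])
    (T : H -> H) (c : R[i]) : Prop :=
  forall x : H, hnorm ip (T x) <= c * hnorm ip x.

Definition bounded_op (R : realType) (H : lmodType R[i]) (ip : H -> H -> R[i])
    (T : H -> H) : Prop :=
  (forall (a : R[i]) (x y : H), T (a *: x + y) = a *: T x + T y) /\
  exists M : R[i], opnorm_le ip T M.

Definition operator_algebra (R : realType) (H : lmodType R[i])
    (ip : H -> H -> R[i]) (A : (H -> H) -> Prop) : Prop :=
  (forall T, A T -> bounded_op ip T) /\
  A (fun _ => 0) /\
  (forall S T, A S -> A T -> A (fun x => S x + T x)) /\
  (forall (a : R[i]) T, A T -> A (fun x => a *: T x)) /\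
  (forall S T, A S -> A T -> A (fun x => S (T x))) /\
  (forall T, bounded_op ip T ->
     (forall eps : R[i], 0 < eps ->
        exists S, A S /\ opnorm_le ip (fun x => T x - S x) eps) ->
     A T).

(* Quasi-identity of the ring A (multiplication = composition), written
   pointwise: r = e r + r e - e r e for every r in A. *)
Definition op_quasi_identity (R : realType) (H : lmodType R[i])
    (A : (H -> H) -> Prop) (e : H -> H) : Prop :=
  A e /\ forall r, A r -> forall x : H, r x = e (r x) + r (e x) - e (r (e x)).

(* Main.v *)
Require Import Defs.
From HB Require Import structures.
From mathcomp Require Import all_boot all_order all_algebra.
From mathcomp Require Import all_classical all_reals.
From mathcomp Require Import topology normedtype.
From mathcomp.real_closed Require Import complex.
Import Order.TTheory GRing.Theory Num.Theory.
Local Open Scope ring_scope.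
Set Implicit Arguments.
Unset Strict Implicit.
Lemma z1 (V : zmodType) (r a b c : V) : r = a + b - c -> r - a - b + c = 0.
Proof. by move=> ->; rewrite [a + b - c - a]addrAC [a + b]addrC addrK addrAC addrNK subrr. Qed.
Lemma z2 (V : zmodType) (r a b c : V) : r - a - b + c = 0 -> r = a + b - c.
Proof. by move=> h; apply/eqP; rewrite -subr_eq0 !opprD !opprK !addrA h. Qed.
Lemma z3 (V : zmodType) (r A B C D E : V) :
  r - B - C + E = (r - A - C + D) + (A - B - D + E).
Proof.
by rewrite [RHS]addrA; congr (_ + _); rewrite addrACA subrr addr0 [r - A - C]addrAC addrA addrNK addrAC.
Qed.
Lemma z4 (V : zmodType) (r X C D F G : V) :
  r - X - F + G = (r - X - C + D) + (C - D - F + G).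
Proof.
rewrite [RHS]addrA; congr (_ + _); rewrite [RHS]addrA; congr (_ + _).
by rewrite addrACA addrNK subrr addr0.
Qed.
Lemma z5 (V : zmodType) (x y z : V) : x = y + y - z -> z - y = y - x.
Proof. by move=> ->; rewrite opprB addrCA opprD addNKr. Qed.

Section NU.
Variables (R : zmodType) (mul : R -> R -> R).
Hypothesis hR : nu_ring mul.

Lemma mA x y z : mul x (mul y z) = mul (mul x y) z.
Proof. by case: hR => h _ _; apply: h. Qed.
Lemma mDl x y z : mul (x + y) z = mul x z + mul y z.
Proof. by case: hR => _ h _; apply: h. Qed.
Lemma mDr x y z : mul z (x + y) = mul z x + mul z y.
Proof. by case: hR => _ _ h; apply: h. Qed.
Lemma m0l x : mul 0 x = 0.
Proof. by apply: (@addrI _ (mul 0 x)); rewrite -mDl !addr0. Qed.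
Lemma m0r x : mul x 0 = 0.
Proof. by apply: (@addrI _ (mul x 0)); rewrite -mDr !addr0. Qed.
Lemma mNl x y : mul (- x) y = - mul x y.
Proof. by apply: (@addIr _ (mul x y)); rewrite -mDl !addNr m0l. Qed.
Lemma mNr x y : mul y (- x) = - mul y x.
Proof. by apply: (@addIr _ (mul y x)); rewrite -mDr !addNr m0r. Qed.
Lemma mBl x y z : mul (x - y) z = mul x z - mul y z.
Proof. by rewrite mDl mNl. Qed.
Lemma mBr x y z : mul z (x - y) = mul z x - mul z y.
Proof. by rewrite mDr mNr. Qed.

Definition Q x y r := r - mul x r - mul r y + mul (mul x r) y.

Lemma QI_Q e : quasi_identity mul e <-> forall r, Q e e r = 0.
Proof. rewrite /Q; split=> h r; [exact: z1 (h r) | exact: z2 (h r)]. Qed.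

Lemma QstepL e a r : Q (mul e a) e r = Q e e r + mul e (Q a e r).
Proof. rewrite /Q !(mBr, mDr, mNr) !mA. exact: z3. Qed.

Lemma QstepR x e b r : Q x (mul e b) r = Q x e r + Q x b (mul r e).
Proof. by rewrite /Q !mA; apply: z4. Qed.

Definition pw e n := iter n (mul e) e.

Lemma pwS e n : pw e n.+1 = mul e (pw e n). Proof. by []. Qed.

Lemma QA e : quasi_identity mul e -> forall n r, Q (pw e n) e r = 0.
Proof.
move=> /QI_Q h; elim=> [|n IH] r //.
by rewrite pwS QstepL h IH m0r addr0.
Qed.

Lemma QB e : quasi_identity mul e -> forall m n r, Q (pw e n) (pw e m) r = 0.
Proof.
move=> h; elim=> [|m IH] n r; first exact: QA.
by rewrite pwS QstepR QA // IH addr0.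
Qed.

Lemma part1 e : quasi_identity mul e -> forall n, (0 < n)%N -> quasi_identity mul (qpow mul e n).
Proof.
move=> h [|n] // _; apply/QI_Q => r; exact: QB.
Qed.

Lemma pw_comm e n : mul (pw e n) e = mul e (pw e n).
Proof. elim: n => [|n IH] //=; by rewrite -mA IH. Qed.

End NU.

Section NA.
Variables (K : numFieldType) (A : normedModType K) (mul : A -> A -> A).
Hypothesis hN : normed_algebra mul.
Hypothesis archi : forall x : K, 0 <= x -> (forall n, x *+ n <= 2) -> x = 0.

Lemma part2 e : quasi_identity mul e -> `|e| <= 1 ->
  mul e e = e /\ (`|e| = 0 \/ `|e| = 1).
Proof.
move=> hq he.
have hR : nu_ring mul by case: hN.
have hsub : forall a b, `|mul a b| <= `|a| * `|b| by case: hN.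
pose d := mul e e - e.
have rec n : pw mul e n.+2 - pw mul e n.+1 = pw mul e n.+1 - pw mul e n.
  apply: z5; have := hq (pw mul e n).
  by rewrite (pw_comm hR e n) -/(pw mul e n.+1) (pw_comm hR e n.+1).
have dn n : pw mul e n.+1 - pw mul e n = d.
  by elim: n => [|n IH] //; rewrite rec.
have pn n : pw mul e n = e + d *+ n.
  elim: n => [|n IH]; first by rewrite mulr0n addr0.
  by rewrite -(subrK (pw mul e n) (pw mul e n.+1)) dn IH mulrSr addrCA [d + _]addrC.
have nb n : `|pw mul e n| <= 1.
  elim: n => [|n IH] //; rewrite pwS.
  apply: le_trans (hsub _ _) _; rewrite -[1](mulr1 1).
  by apply: ler_pM => //; apply: normr_ge0.
have d0 : `|d| = 0.
  apply: archi; first exact: normr_ge0.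
  move=> n; rewrite -normrMn.
  have -> : d *+ n = pw mul e n - e by rewrite pn addrC addKr.
  apply: le_trans (ler_normB _ _) _.
  by rewrite -[2%:R]/(1 + 1); apply: lerD.
have hee : mul e e = e.
  by apply/eqP; rewrite -subr_eq0; apply/eqP/normr0_eq0.
split => //.
case: (eqVneq `|e| 0) => [-> | ne]; [by left | right].
have pos : 0 < `|e| by rewrite lt_def ne normr_ge0.
apply: le_anti; rewrite he /=.
have h1 : `|e| <= `|e| * `|e| by rewrite -{1}hee; exact: hsub.
by rewrite -(ler_pM2l pos) mulr1.
Qed.
End NA.

From mathcomp Require Import ring.

Section OP.
Variables (R : realType) (H : lmodType R[i]) (ip : H -> H -> R[i]).
Hypothesis hH : is_hilbert ip.

Lemma ipax a x y z : ip (a *: x + y) z = a * ip x z + ip y z.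
Proof. by case: hH => h _ _ _ _; apply: h. Qed.
Lemma ipC x y : ip y x = Num.conj (ip x y).
Proof. by case: hH => _ h _ _ _; apply: h. Qed.
Lemma ipge0 x : 0 <= ip x x.
Proof. by case: hH => _ _ h _ _; apply: h. Qed.
Lemma ip_eq0 x : ip x x = 0 -> x = 0.
Proof. by case: hH => _ _ _ h _; apply: h. Qed.
Lemma ipD x y z : ip (x + y) z = ip x z + ip y z.
Proof. by have := ipax 1 x y z; rewrite scale1r mul1r. Qed.
Lemma ip0l z : ip 0 z = 0.
Proof.
have h := ipD 0 0 z; rewrite addr0 in h.
by apply: (@addrI _ (ip 0 z)); rewrite addr0 -h.
Qed.
Lemma ipZ a x z : ip (a *: x) z = a * ip x z.
Proof. by have := ipax a x 0 z; rewrite addr0 ip0l addr0. Qed.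
Lemma ipN x z : ip (- x) z = - ip x z.
Proof. by rewrite -scaleN1r ipZ mulN1r. Qed.
Lemma ipB x y z : ip (x - y) z = ip x z - ip y z.
Proof. by rewrite ipD ipN. Qed.
Lemma ipDr z x y : ip z (x + y) = ip z x + ip z y.
Proof. by rewrite ipC ipD rmorphD; congr (_ + _); rewrite [RHS]ipC. Qed.
Lemma ipZr z a x : ip z (a *: x) = Num.conj a * ip z x.
Proof. by rewrite ipC ipZ rmorphM; congr (_ * _); rewrite [RHS]ipC. Qed.
Lemma ipNr z x : ip z (- x) = - ip z x.
Proof. by rewrite ipC ipN rmorphN; congr (- _); rewrite [RHS]ipC. Qed.
Lemma ipBr z x y : ip z (x - y) = ip z x - ip z y.
Proof. by rewrite ipDr ipNr. Qed.
Lemma ip0r z : ip z 0 = 0.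
Proof. by rewrite ipC ip0l rmorph0. Qed.

Definition lin (T : H -> H) := forall (a : R[i]) (x y : H), T (a *: x + y) = a *: T x + T y.

Section Lin.
Variable T : H -> H.
Hypothesis hT : lin T.
Lemma TD x y : T (x + y) = T x + T y.
Proof. by have := hT 1 x y; rewrite !scale1r. Qed.
Lemma T0 : T 0 = 0.
Proof.
have h := TD 0 0; rewrite addr0 in h.
by apply: (@addrI _ (T 0)); rewrite addr0 -h.
Qed.
Lemma TZ a x : T (a *: x) = a *: T x.
Proof. by have := hT a x 0; rewrite addr0 T0 addr0. Qed.
Lemma TN x : T (- x) = - T x.
Proof. by rewrite -scaleN1r TZ scaleN1r. Qed.
Lemma TB x y : T (x - y) = T x - T y.
Proof. by rewrite TD TN. Qed.

Lemma contr : opnorm_le ip T 1 -> forall x, ip (T x) (T x) <= ip x x.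
Proof.
move=> h x; have := h x; rewrite /hnorm mul1r.
have g0 : forall v, ip v v \in Num.nneg by move=> v; rewrite nnegrE ipge0.
by rewrite (ler_sqrtC (g0 _) (g0 _)).
Qed.
End Lin.

Lemma conj_ge0 (s : R[i]) : 0 <= s -> Num.conj s = s.
Proof. by move=> s0; apply: conj_Creal; apply: ger0_real. Qed.

Lemma idem e : lin e -> opnorm_le ip e 1 ->
  (forall x, e x = e (e x) + e (e x) - e (e (e x))) -> forall x, e (e x) = e x.
Proof.
move=> le he hq x.
set u := e x.
pose w := e u - u.
have ew : e w = w by rewrite /w (TB le); apply: z5; exact: hq.
have eu : e u = u + w by rewrite /w addrC subrK.
clearbody w u.
suff : ip w w = 0 by move/ip_eq0; rewrite eu => ->; rewrite addr0.
pose c := ip w w; pose b := ip u w + ip w u.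
have key s : 0 <= s -> b + ((s * c) *+ 2 + c) <= 0.
  move=> s0; pose v := u + s *: w.
  have := contr he v.
  have -> : e v = v + w by rewrite /v (TD le) (TZ le) ew eu addrAC.
  rewrite ipD !ipDr -addrA gerDl.
  rewrite /v !ipD ipZ ipZr conj_ge0 //.
  have -> : ip u w + s * ip w w + (ip w u + s * ip w w + ip w w) = b + ((s * c) *+ 2 + c).
    by rewrite /b /c; ring.
  done.
apply/eqP; apply: contraT => cn.
have cpos : 0 < c by rewrite lt_def cn ipge0.
pose s := `|b| / c.
have s0 : 0 <= s by rewrite /s divr_ge0 // ?normr_ge0 // ltW.
have sc : s * c = `|b| by rewrite /s divfK.
have k := key s s0; rewrite sc in k.
have breal : b \is Num.real.
  have -> : b = (b + (`|b| *+ 2 + c)) - (`|b| *+ 2 + c) by rewrite addrK.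
  apply: rpredB; first exact: ler0_real.
  by apply: rpredD; [apply: rpredMn; apply: normr_real | apply: ger0_real; apply: ltW].
have h1 : 0 <= b + `|b|.
  have bN : - b \is Num.real by rewrite rpredN.
  by have := real_ler_norm bN; rewrite normrN -subr_ge0 opprK addrC.
have : 0 < b + (`|b| *+ 2 + c).
  have -> : b + (`|b| *+ 2 + c) = (b + `|b|) + (`|b| + c) by ring.
  by apply: ltr_wpDl h1 _; apply: ltr_wpDl (normr_ge0 _) cpos.
by move=> /(lt_le_trans)/(_ k); rewrite ltxx.
Qed.


Lemma orth e : lin e -> opnorm_le ip e 1 -> forall y z, e y = y -> e z = 0 -> ip z y = 0.
Proof.
move=> le he y z ey ez.
pose m := ip z y; pose c := ip z z.
pose s := (c + 1)^-1.
have c0 : 0 <= c by apply: ipge0.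
have c1 : 0 < c + 1 by apply: ltr_wpDl c0 ltr01.
have spos : 0 < s by rewrite invr_gt0.
have sc : s * c < 1 by rewrite mulrC ltr_pdivrMr // mul1r ltrDl ltr01.
pose t := - (s * Num.conj m).
have tc : Num.conj t = - (s * m).
  by rewrite /t rmorphN rmorphM; congr (- (_ * _)); [exact: conj_ge0 (ltW spos) | exact: conjCK].
have := contr he (y + t *: z).
rewrite (TD le) (TZ le) ey ez scaler0 addr0.
rewrite !ipD !ipDr -addrA lerDl !ipZ !ipZr tc.
have -> : ip y z = Num.conj m by rewrite /m ipC.
pose N := m * Num.conj m.
have -> : - (s * m) * Num.conj m + (t * ip z y + t * (- (s * m) * ip z z))
   = (s * N) * (s * c - 2).
  by rewrite /t /N /m /c; ring.
have N0 : 0 <= N by rewrite /N -normCK exprn_ge0 // normr_ge0.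
case: (eqVneq N 0) => [N0e _ | Nn].
  by move: N0e; rewrite /N -normCK => /eqP; rewrite expf_eq0 /= normr_eq0 => /eqP.
have Np : 0 < N by rewrite lt_def Nn N0.
have hneg : s * c - 2 < 0.
  rewrite subr_lt0; apply: lt_trans sc _.
  by rewrite ltr1n.
have : (s * N) * (s * c - 2) < 0 by rewrite pmulr_rlt0 // mulr_gt0.
by move=> h1 h2; have := lt_le_trans h1 h2; rewrite ltxx.
Qed.

Lemma herm e : lin e -> opnorm_le ip e 1 -> (forall x, e (e x) = e x) ->
  forall x y, ip (e x) y = ip x (e y).
Proof.
move=> le he hi x y.
have o : forall a b, ip (a - e a) (e b) = 0.
  move=> a b; apply: (orth le he); first exact: hi.
  by rewrite (TB le) hi subrr.
have -> : ip (e x) y = ip (e x) (e y).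
  rewrite -{1}(subrK (e y) y) ipDr.
  by rewrite [ip (e x) (y - e y)]ipC o rmorph0 add0r.
by rewrite -{2}(subrK (e x) x) ipD o add0r.
Qed.

Lemma half e e' : lin e -> lin e' ->
  (forall x, e (e x) = e x) -> (forall x, e' (e' x) = e' x) ->
  (forall x y, ip (e x) y = ip x (e y)) -> (forall x y, ip (e' x) y = ip x (e' y)) ->
  (forall x, e' x = e (e' x) + e' (e x) - e (e' (e x))) ->
  forall x, e' x = e' (e x).
Proof.
move=> le le' hi hi' hh hh' hq x.
pose u := x - e x.
have eu : e u = 0 by rewrite /u (TB le) hi subrr.
have e'u : e' u = e (e' u) by rewrite {1}hq eu (T0 le') (T0 le) addr0 subr0.
have : ip (e' u) (e' u) = 0.
  by rewrite hh' hi' e'u -hh eu ip0l.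
move/ip_eq0; rewrite /u (TB le') => /eqP; rewrite subr_eq0 => /eqP.
done.
Qed.

End OP.

Lemma archiR (R : realType) (x : R) : 0 <= x -> (forall n, x *+ n <= 2) -> x = 0.
Proof.
move=> x0 h; apply/eqP; apply: contraT => nz.
have xp : 0 < x by rewrite lt_def nz x0.
have hb := archi_boundP (divr_ge0 (ler0n R 2) x0).
have := h (Num.bound (2 / x)); rewrite -[x *+ _]mulr_natr.
rewrite ltr_pdivrMr // mulrC in hb.
by move=> h'; have := lt_le_trans hb h'; rewrite ltxx.
Qed.
Lemma archiC (R : realType) (x : R[i]) : 0 <= x -> (forall n, x *+ n <= 2) -> x = 0.
Proof.
case: x => a b x0 h.
have hb : b = 0 by move: x0; rewrite lecE /= => /andP[/eqP -> _].
subst b.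
have a0 : 0 <= a by move: x0; rewrite lecE /= => /andP[_ ->].
suff -> : a = 0 by [].
apply: archiR => // n; have := h n; rewrite lecE => /andP[_].
by rewrite raddfMn /=.
Qed.

Theorem proposition4p4 :
  (* (1) powers of quasi-identities in a ring *)
  (forall (R : zmodType) (mul : R -> R -> R) (e : R),
     nu_ring mul -> quasi_identity mul e ->
     forall n : nat, (0 < n)%N -> quasi_identity mul (qpow mul e n)) /\
  (* (2) contractive quasi-identities of real normed algebras *)
  (forall (R : realType) (A : normedModType R) (mul : A -> A -> A) (e : A),
     normed_algebra mul -> quasi_identity mul e -> `|e| <= 1 ->
     mul e e = e /\ (`|e| = 0 \/ `|e| = 1)) /\
  (* (2) contractive quasi-identities of complex normed algebras *)
  (forall (R : realType) (A : normedModType R[i]) (mul : A -> A -> A) (e : A),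
     normed_algebra mul -> quasi_identity mul e -> `|e| <= 1 ->
     mul e e = e /\ (`|e| = 0 \/ `|e| = 1)) /\
  (* (3) operator algebras *)
  (forall (R : realType) (H : lmodType R[i]) (ip : H -> H -> R[i])
          (A : (H -> H) -> Prop),
     is_hilbert ip -> operator_algebra ip A ->
     (forall e e' : H -> H,
        op_quasi_identity A e -> opnorm_le ip e 1 ->
        op_quasi_identity A e' -> opnorm_le ip e' 1 -> e = e') /\
     (forall e : H -> H,
        op_quasi_identity A e -> opnorm_le ip e 1 ->
        (forall x y : H, ip (e x) y = ip x (e y)) /\
        (forall x : H, e (e x) = e x))).
Proof.
split; first by move=> R mul e hR hq n hn; exact: part1.
split; first by move=> R A mul e hN; apply: part2 => //; exact: archiR.
split; first by move=> R A mul e hN; apply: part2 => //; exact: archiC.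
move=> R H ip A hH [hb _].
have props : forall e, op_quasi_identity A e -> opnorm_le ip e 1 ->
   [/\ lin e, (forall x, e (e x) = e x) & (forall x y, ip (e x) y = ip x (e y))].
  move=> e [Ae hq] he.
  have le : lin e by case: (hb e Ae).
  have hi : forall x, e (e x) = e x by apply: (idem hH le he) => x; exact: hq.
  by split => //; exact: herm.
split; last first.
  by move=> e qe he; case: (props e qe he) => _ hi hh.
move=> e e' qe he qe' he'.
case: (props e qe he) => le hi hh.
case: (props e' qe' he') => le' hi' hh'.
case: qe => Ae hq; case: qe' => Ae' hq'.
have A1 := half hH le le' hi hi' hh hh' (hq e' Ae').
have A2 := half hH le' le hi' hi hh' hh (hq' e Ae).
apply: boolp.funext => x.
have hy : forall y, ip (e' x) y = ip (e x) y.
  by move=> y; rewrite hh' A1 -hh' -hh -A2.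
have : ip (e' x - e x) (e' x - e x) = 0 by rewrite (ipB hH) !hy subrr.
by move/(ip_eq0 hH)/eqP; rewrite subr_eq0 => /eqP.
Qed.
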